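(* Let $\lambda,\mu,\alpha>0$ and let $\xi(t)$, $t\ge 0$, be the Poisson process with uniform catastrophes with parameters $\lambda,\mu,\alpha$ (defined in the context). Let $\varphi:(0,\infty)\to(0,\infty)$ be a function such that $\lim_{T\to\infty}\varphi(T)/T=\infty$. Then the family of random variables $\xi_T(1):=\xi(T)/\varphi(T)$ satisfies the large deviation principle on $\mathbb{R}$ with normalizing function $\psi(T)=\varphi(T)\ln\frac{\varphi(T)}{T}$ and rate function $$ I_2(x)=\begin{cases}\infty, & x\in(-\infty,0),\\ x, & x\in[0,\infty).\end{cases} $$
   Context: Poisson process with uniform catastrophes: let $\eta(n)$, $n\in\mathbb{Z}^+=\{0,1,2,\dots\}$, be a Markov chain on $\mathbb{Z}^+$ with $\eta(0)=0$ and transition probabilities $\mathbf{P}(\eta(n+1)=j\mid\eta(n)=i)=\frac{\lambda}{\lambda+\mu}$ if $j=i+1$ (and $i\ge 1$), $=\frac{\mu}{i(\lambda+\mu)}$ if $0\le j<i$, $i\neq0$, and $=1$ if $i=0$, $j=1$. Let $\nu(t)$, $t\ge0$, be a Poisson process with rate $\alpha$, independent of $\eta$. Set $\xi(t):=\eta(\nu(t))$. Large deviation principle (LDP): a family of real random variables $X_T$ satisfies the LDP with rate function $I:\mathbb{R}\to[0,\infty]$ and normalizing function $\psi(T)\to\infty$ if for every $c\ge0$ the set $\{x: I(x)\le c\}$ is compact, and for every Borel set $B\subseteq\mathbb{R}$, $\limsup_{T\to\infty}\frac{1}{\psi(T)}\ln\mathbf{P}(X_T\in B)\le -I([B])$ and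 $\liminf_{T\to\infty}\frac{1}{\psi(T)}\ln\mathbf{P}(X_T\in B)\ge -I((B))$, where $[B]$ and $(B)$ denote closure and interior, $I(B)=\inf_{x\in B}I(x)$ and $I(\emptyset)=\infty$. *)

(* Defs.v *)
From HB Require Import structures.
From mathcomp Require Import all_boot all_order all_algebra.
From mathcomp Require Import all_classical all_reals all_analysis.
Set Implicit Arguments. Unset Strict Implicit. Unset Printing Implicit Defensive.
Import Order.TTheory GRing.Theory Num.Theory.
Import numFieldNormedType.Exports.
Local Open Scope classical_set_scope.
Local Open Scope ring_scope.

Section PUC.
Variable R : realType.

(* One-step transition probability P(eta(n+1) = j | eta(n) = i) of the
   embedded Markov chain eta (Poisson process with uniform catastrophes). *)
Definition puc_trans (lam mu : R) (i j : nat) : R :=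
  if i == 0%N then (if j == 1%N then 1 else 0)
  else if j == i.+1 then lam / (lam + mu)
  else if (j < i)%N then mu / (i%:R * (lam + mu))
  else 0.

(* Law of eta(n), eta(0) = 0: puc_eta_law n j = P(eta(n) = j).
   Chapman-Kolmogorov; the sum over i < n.+1 is exhaustive since
   eta(n) <= n surely (eta increases by at most 1 per step). *)
Fixpoint puc_eta_law (lam mu : R) (n : nat) : nat -> R :=
  match n with
  | 0%N => fun j => if j == 0%N then 1 else 0
  | n'.+1 => fun j => \sum_(i < n'.+1) puc_eta_law lam mu n' i * puc_trans lam mu i j
  end.

Definition poisson_pmf (alpha t : R) (n : nat) : R :=
  expR (- (alpha * t)) * (alpha * t) ^+ n / n`!%:R.

(* P(xi(t) = k) where xi(t) = eta(nu(t)), nu independent of eta. *)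
Definition puc_xi_law (lam mu alpha t : R) (k : nat) : \bar R :=
  (\sum_(n <oo) (poisson_pmf alpha t n * puc_eta_law lam mu n k)%:E)%E.

Definition puc_prob (lam mu alpha : R) (phi : R -> R) (T : R) (B : set R) : \bar R :=
  (\sum_(k <oo) (if pselect (B ((k%:R / phi T)%R)) then puc_xi_law lam mu alpha T k
                 else 0%E))%E.

End PUC.

Section LDP.
Variable R : realType.
Local Open Scope ereal_scope.

Definition rate_inf (I : R -> \bar R) (A : set R) : \bar R := ereal_inf (I @` A).

Definition norm_log (psi : R -> R) (p : R -> \bar R) (T : R) : \bar R :=
  if p T == 0 then -oo else ((ln (fine (p T)) / psi T)%R)%:E.

(* Large deviation principle for the family of laws prob T (a function giving
   P(X_T \in B) for every set B), with rate function I and normalizing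
   function psi, as T -> +oo. *)
Definition LDP (prob : R -> set R -> \bar R) (I : R -> \bar R) (psi : R -> R) : Prop :=
  (forall c : R, (0 <= c)%R -> compact [set x | I x <= c%:E]) /\
  (forall B : set R, measurable B ->
     limf_esup (norm_log psi (fun T => prob T B)) (pinfty_nbhs R)
       <= - rate_inf I (closure B)) /\
  (forall B : set R, measurable B ->
     limf_einf (norm_log psi (fun T => prob T B)) (pinfty_nbhs R)
       >= - rate_inf I (interior B)).

End LDP.

Definition rate_I2 {R : realType} (x : R) : \bar R :=
  if (x < 0)%R then +oo%E else x%:E.

(* Main.v *)
Require Import Defs.
From HB Require Import structures.
From mathcomp Require Import all_boot all_order all_algebra.
From mathcomp Require Import all_classical all_reals all_analysis.
From mathcomp Require Import zify ring lra.
Import Order.TTheory GRing.Theory Num.Theory.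
Import numFieldNormedType.Exports.
Local Open Scope classical_set_scope.
Local Open Scope ring_scope.


Lemma trans_ge0 {R : realType} (lam mu : R) i j : 0 < lam -> 0 < mu ->
  0 <= puc_trans lam mu i j.
Proof.
move=> l0 m0; rewrite /puc_trans.
have lm : 0 < lam + mu by rewrite addr_gt0.
case: ifP => _; first by case: ifP.
case: ifP => _; first by rewrite divr_ge0 // ltW.
case: ifP => _ //; rewrite divr_ge0 ?mulr_ge0 // ltW //.
Qed.

Lemma eta_ge0 {R : realType} (lam mu : R) n k : 0 < lam -> 0 < mu ->
  0 <= puc_eta_law lam mu n k.
Proof.
move=> l0 m0; elim: n k => [|n IH] k /=; first by case: ifP.
by apply: sumr_ge0 => i _; rewrite mulr_ge0 // trans_ge0.
Qed.

Lemma eta_zero {R : realType} (lam mu : R) n k : (n < k)%N ->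
  puc_eta_law lam mu n k = 0.
Proof.
elim: n k => [|n IH] k /= nk; first by case: k nk.
apply: big1 => i _; rewrite /puc_trans.
have ik : (i < n.+1)%N by [].
case: ifP => [/eqP i0|i0].
  by rewrite ifF ?mulr0 //; apply/negbTE; rewrite neq_ltn; apply/orP; right; apply: leq_ltn_trans nk.
rewrite ifF; last by apply/negbTE; rewrite neq_ltn; apply/orP; right; apply: leq_ltn_trans nk.
by rewrite ifF ?mulr0 //; apply/negbTE; rewrite -leqNgt; apply: ltnW; apply: leq_ltn_trans nk; apply: ltnW.
Qed.

Lemma sum_eq_nat {R : realType} N a : (a < N)%N ->
  \sum_(j < N) ((j == a :> nat)%:R : R) = 1.
Proof.
move=> aN; rewrite (bigD1 (Ordinal aN)) //= eqxx big1 ?addr0 // => j /eqP ja.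
case: eqP => // jb; exfalso; apply: ja; exact: val_inj.
Qed.

Lemma sum_lt_nat {R : realType} N i :
  \sum_(j < N) ((j < i)%N%:R : R) = (minn N i)%:R.
Proof.
elim: N => [|N IH]; first by rewrite big_ord0 min0n.
rewrite big_ord_recr /= IH -natrD; congr (_%:R).
case: (ltnP N i) => h /=; [rewrite addn1|rewrite addn0]; lia.
Qed.

Lemma trans_sum {R : realType} (lam mu : R) n i : 0 < lam -> 0 < mu -> (i <= n)%N ->
  \sum_(j < n.+2) puc_trans lam mu i j = 1.
Proof.
move=> l0 m0 iN.
have lm : lam + mu != 0 by rewrite gt_eqF // addr_gt0.
case: (posnP i) => [->|ip].
  rewrite (eq_bigr (fun j : 'I_n.+2 => ((j == 1%N :> nat)%:R : R))); first exact: sum_eq_nat.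
  by move=> j _; rewrite /puc_trans /=; case: eqP.
rewrite (eq_bigr (fun j : 'I_n.+2 => ((j == i.+1 :> nat)%:R : R) * (lam / (lam + mu))
   + ((j < i)%N%:R : R) * (mu / (i%:R * (lam + mu))))).
  rewrite big_split /= -!mulr_suml sum_eq_nat ?ltnS // sum_lt_nat.
  have -> : minn n.+2 i = i by apply/minn_idPr; apply: leq_trans iN _; apply: leq_trans (leqnSn _) _.
  have i0 : (i%:R : R) != 0 by rewrite pnatr_eq0 -lt0n.
  by field; rewrite lm i0.
move=> j _; rewrite /puc_trans ifF; last by apply/negbTE; rewrite -lt0n.
case: eqP => [->|_]; first by rewrite ltnNge leqnSn /= mul1r mul0r addr0.
by case: ifP => _; rewrite ?mul0r ?mul1r ?add0r.
Qed.

Lemma eta_sum {R : realType} (lam mu : R) n : 0 < lam -> 0 < mu ->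
  \sum_(k < n.+1) puc_eta_law lam mu n k = 1.
Proof.
move=> l0 m0; elim: n => [|n IH]; first by rewrite big_ord1 /=.
rewrite /= exchange_big /=.
rewrite (eq_bigr (fun i : 'I_n.+1 => puc_eta_law lam mu n i)) // => i _.
by rewrite -mulr_sumr trans_sum ?mulr1 // -ltnS.
Qed.

Lemma eta_le1 {R : realType} (lam mu : R) n k : 0 < lam -> 0 < mu ->
  puc_eta_law lam mu n k <= 1.
Proof.
move=> l0 m0; case: (ltnP n k) => nk; first by rewrite eta_zero.
rewrite -(@eta_sum R lam mu n l0 m0).
have kn : (k < n.+1)%N by [].
rewrite (bigD1 (Ordinal kn)) //= lerDl sumr_ge0 // => i _; exact: eta_ge0.
Qed.

Lemma eta_diag {R : realType} (lam mu : R) n : 0 < lam -> 0 < mu ->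
  (lam / (lam + mu)) ^+ n <= puc_eta_law lam mu n n.
Proof.
move=> l0 m0; have lm : 0 < lam + mu by rewrite addr_gt0.
have q0 : 0 <= lam / (lam + mu) by rewrite divr_ge0 // ltW.
have q1 : lam / (lam + mu) <= 1 by rewrite ler_pdivrMr // mul1r lerDl ltW.
elim: n => [|n IH]; first by rewrite expr0 /=.
rewrite /= (bigD1 ord_max) //= exprSr.
rewrite -[X in X <= _]addr0; apply: lerD.
  apply: ler_pM => //; first exact: exprn_ge0.
  rewrite /puc_trans; case: eqP => [->|_]; first by [].
  by rewrite eqxx.
apply: sumr_ge0 => i _; rewrite mulr_ge0 // ?eta_ge0 // trans_ge0 //.
Qed.

Lemma exp_partial {R : realType} (a : R) N : 0 <= a ->
  \sum_(0 <= j < N) a ^+ j / j`!%:R <= expR a.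
Proof.
move=> a0.
have := @nondecreasing_cvgn_le R (series (exp_coeff a)).
rewrite /expR; apply.
- by apply: nondecreasing_series => n _ _; exact: exp_coeff_ge0.
- exact: is_cvg_series_exp_coeff.
Qed.

Lemma fact_split {R : realType} (a : R) m n : 0 <= a -> (m <= n)%N ->
  a ^+ n / n`!%:R <= a ^+ m / m`!%:R * (a ^+ (n - m) / (n - m)`!%:R).
Proof.
move=> a0 mn.
have -> : a ^+ n = a ^+ m * a ^+ (n - m) by rewrite -exprD subnKC.
rewrite mulrACA -invfM -natrM.
apply: ler_wpM2l; first by rewrite mulr_ge0 // exprn_ge0.
rewrite lef_pV2 ?posrE ?ltr0n ?muln_gt0 ?fact_gt0 // ler_nat.
by rewrite -(bin_fact mn) leq_pmull // bin_gt0.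
Qed.

Lemma tail_bound {R : realType} (a : R) m N : 0 <= a ->
  \sum_(0 <= n < N) ((m <= n)%N%:R * (a ^+ n / n`!%:R)) <= a ^+ m / m`!%:R * expR a.
Proof.
move=> a0; have [Nm|Nm] := leqP N m.
  rewrite big_nat_cond big1 ?mulr_ge0 ?divr_ge0 ?exprn_ge0 ?expR_ge0 // => n /andP[/andP[_ nN] _].
  by rewrite leqNgt (leq_trans nN Nm) mul0r.
rewrite (big_cat_nat _ (n:=m)) //=; last exact: ltnW.
rewrite big_nat_cond big1 ?add0r; last first.
  by move=> n /andP[/andP[_ nm] _]; rewrite leqNgt nm mul0r.
rewrite -{1}(add0n m) big_addn.
rewrite (eq_bigr (fun i => a ^+ (i + m) / (i + m)`!%:R)); last by move=> i _; rewrite leq_addl mul1r.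
apply: le_trans (_ : \sum_(0 <= i < N - m) (a ^+ m / m`!%:R * (a ^+ i / i`!%:R)) <= _).
  apply: ler_sum => i _; have := @fact_split R a m (i + m) a0 (leq_addl i m); by rewrite addnK.
by rewrite -mulr_sumr ler_wpM2l ?exp_partial // divr_ge0 ?exprn_ge0.
Qed.

Lemma pmf_ge0 {R : realType} (alpha T : R) n : 0 <= alpha * T -> 0 <= Defs.poisson_pmf alpha T n.
Proof. by move=> a0; rewrite /Defs.poisson_pmf !mulr_ge0 ?expR_ge0 ?exprn_ge0 ?invr_ge0. Qed.

Lemma xi_ge0 {R : realType} (lam mu alpha T : R) k : 0 < lam -> 0 < mu -> 0 <= alpha * T ->
  (0 <= puc_xi_law lam mu alpha T k)%E.
Proof.
move=> l0 m0 a0; apply: nneseries_ge0 => n _ _.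
by rewrite lee_fin mulr_ge0 ?pmf_ge0 ?eta_ge0.
Qed.

Lemma xi_upper {R : realType} (lam mu alpha T : R) k : 0 < lam -> 0 < mu -> 0 <= alpha * T ->
  (puc_xi_law lam mu alpha T k <= ((alpha * T) ^+ k / k`!%:R)%:E)%E.
Proof.
move=> l0 m0 a0; rewrite /puc_xi_law; apply: lime_le.
  by apply: is_cvg_nneseries => n _ _; rewrite lee_fin mulr_ge0 ?pmf_ge0 ?eta_ge0.
apply: nearW => N; rewrite sumEFin lee_fin.
apply: le_trans (_ : \sum_(0 <= n < N) (expR (- (alpha * T)) *
     ((k <= n)%N%:R * ((alpha * T) ^+ n / n`!%:R))) <= _).
  apply: ler_sum => n _; rewrite /Defs.poisson_pmf -!mulrA ler_wpM2l ?expR_ge0 //.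
  rewrite mulrA [_ * (_ * _)]mulrC [X in _ <= X]mulrC mulrA.
  case: (leqP k n) => kn /=.
    by rewrite mul1r ler_piMr ?eta_le1 // divr_ge0 ?exprn_ge0.
  by rewrite eta_zero // !mulr0 !mul0r.
rewrite -mulr_sumr.
apply: le_trans (ler_wpM2l (expR_ge0 _) (@tail_bound R _ k N a0)) _.
by rewrite mulrCA -expRD addNr expR0 mulr1.
Qed.

Lemma xi_lower {R : realType} (lam mu alpha T : R) k : 0 < lam -> 0 < mu -> 0 <= alpha * T ->
  ((Defs.poisson_pmf alpha T k * (lam / (lam + mu)) ^+ k)%:E <= puc_xi_law lam mu alpha T k)%E.
Proof.
move=> l0 m0 a0; rewrite /puc_xi_law.
apply: le_trans (nneseries_lim_ge (k.+1) _); last first.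
  by move=> n _ _; rewrite lee_fin mulr_ge0 ?pmf_ge0 ?eta_ge0.
rewrite big_nat_recr //=; apply: (@le_trans _ _ (0 + (Defs.poisson_pmf alpha T k * puc_eta_law lam mu k k)%:E)%E).
  by rewrite add0e lee_fin ler_wpM2l ?pmf_ge0 ?eta_diag.
apply: leeD => //; apply: sume_ge0 => n _; rewrite lee_fin mulr_ge0 ?pmf_ge0 ?eta_ge0 //.
Qed.

Lemma term_le_series {R : realType} (u : nat -> \bar R) k :
  (forall n, (0 <= u n)%E) -> (u k <= \sum_(n <oo) u n)%E.
Proof.
move=> u0; apply: le_trans (nneseries_lim_ge (k.+1) _); last by move=> n _ _; exact: u0.
rewrite big_nat_recr //=; apply: (@le_trans _ _ (0 + u k)%E); first by rewrite add0e.
by apply: leeD => //; apply: sume_ge0 => n _; exact: u0.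
Qed.

Lemma prob_upper {R : realType} (lam mu alpha : R) (phi : R -> R) T B m :
  0 < lam -> 0 < mu -> 0 <= alpha * T ->
  (forall k : nat, B (k%:R / phi T) -> (m <= k)%N) ->
  (puc_prob lam mu alpha phi T B <= ((alpha * T) ^+ m / m`!%:R * expR (alpha * T))%:E)%E.
Proof.
move=> l0 m0 a0 hB; rewrite /puc_prob; apply: lime_le.
  by apply: is_cvg_nneseries => n _ _; destruct (pselect _) => //; exact: xi_ge0.
apply: nearW => N.
apply: le_trans (_ : (\sum_(0 <= k < N) ((m <= k)%N%:R * ((alpha * T) ^+ k / k`!%:R))%:E <= _)%E).
  apply: lee_sum => k _; destruct (pselect _) as [Bk|nBk].
    have mk := hB _ Bk.
    by rewrite mk mul1r xi_upper.
  by rewrite lee_fin mulr_ge0 // divr_ge0 ?exprn_ge0.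
by rewrite sumEFin lee_fin tail_bound.
Qed.

Lemma prob_lower {R : realType} (lam mu alpha : R) (phi : R -> R) T B k :
  0 < lam -> 0 < mu -> 0 <= alpha * T -> B (k%:R / phi T) ->
  ((Defs.poisson_pmf alpha T k * (lam / (lam + mu)) ^+ k)%:E <= puc_prob lam mu alpha phi T B)%E.
Proof.
move=> l0 m0 a0 hB; rewrite /puc_prob.
apply: le_trans (@term_le_series R _ k _); last by move=> n; destruct (pselect _) => //; exact: xi_ge0.
by destruct (pselect _) => //; exact: xi_lower.
Qed.


Lemma ln_le_sub1 {R : realType} (x : R) : 0 < x -> ln x <= x - 1.
Proof.
move=> x0; have := expR_ge1Dx (ln x); rewrite lnK ?posrE //; lra.
Qed.

Lemma xlnx_mono {R : realType} (c M x : R) : 0 < c -> c <= M -> M <= x ->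
  M * (ln M - ln c - 1) <= x * (ln x - ln c - 1).
Proof.
move=> c0 cM Mx.
have M0 : 0 < M by apply: lt_le_trans cM.
have x0 : 0 < x by apply: lt_le_trans Mx.
have h1 : ln M - ln x <= M / x - 1.
  rewrite -ln_div ?posrE //; apply: ln_le_sub1; exact: divr_gt0.
have h2 : x * (ln M - ln x) <= M - x.
  have e : M - x = x * (M / x - 1) by field; rewrite gt_eqF.
  by rewrite e ler_wpM2l // ltW.
have h3 : ln c <= ln M by rewrite ler_ln ?posrE.
have h4 : 0 <= x - M by lra.
have h5 : (x - M) * ln c <= (x - M) * ln M by exact: ler_wpM2l.
nra.
Qed.

Lemma lnfact_ge {R : realType} (m : nat) :
  (m%:R : R) * ln m%:R - m%:R <= ln (m`!%:R : R).
Proof.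
case: m => [|m]; first by rewrite !mul0r subr0 /= ln1.
have hm : (0 : R) < m.+1%:R by rewrite ltr0n.
have := expR_ge1Dxn m (ltW hm).
have hf : (0 : R) < m.+1`!%:R by rewrite ltr0n fact_gt0.
move=> h.
have h' : ((m.+1%:R : R) ^+ m.+1 / m.+1`!%:R) <= expR m.+1%:R by lra.
have := h'; rewrite -ler_ln ?posrE ?expR_gt0 ?divr_gt0 ?exprn_gt0 // expRK.
rewrite ln_div ?posrE ?exprn_gt0 // lnXn // -mulr_natl; lra.
Qed.

Lemma lnfact_le {R : realType} (m : nat) :
  ln (m`!%:R : R) <= (m%:R : R) * ln m%:R.
Proof.
case: m => [|m]; first by rewrite mul0r /= ln1.
have hm : (0 : R) < m.+1%:R by rewrite ltr0n.
rewrite mulr_natl -lnXn // ler_ln ?posrE ?ltr0n ?fact_gt0 ?exprn_gt0 //.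
rewrite -natrX ler_nat.
elim: m {hm} => [|m IH] //.
rewrite factS expnS leq_mul //; apply: leq_trans IH _.
by rewrite leq_exp2r.
Qed.

Lemma ln_pow {R : realType} (x : R) n : 0 < x -> ln (x ^+ n) = n%:R * ln x.
Proof. by move=> x0; rewrite lnXn // mulr_natl. Qed.

Lemma ln_upper {R : realType} (a p : R) (m : nat) : 0 < a -> 0 < p ->
  p <= a ^+ m / m`!%:R * expR a -> ln p <= a - m%:R * (ln m%:R - ln a - 1).
Proof.
move=> a0 p0 hp.
have f0 : (0 : R) < m`!%:R by rewrite ltr0n fact_gt0.
have b0 : 0 < a ^+ m / m`!%:R * expR a by rewrite mulr_gt0 ?divr_gt0 ?exprn_gt0 ?expR_gt0.
have := hp; rewrite -ler_ln ?posrE // lnM ?posrE ?divr_gt0 ?exprn_gt0 ?expR_gt0 //.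
rewrite expRK ln_div ?posrE ?exprn_gt0 // ln_pow //.
have := @lnfact_ge R m; lra.
Qed.

Lemma ln_lower {R : realType} (a q p : R) (k : nat) : 0 < a -> 0 < q ->
  expR (- a) * a ^+ k / k`!%:R * q ^+ k <= p -> - a - k%:R * (ln k%:R - ln a - ln q) <= ln p.
Proof.
move=> a0 q0 hp.
have f0 : (0 : R) < k`!%:R by rewrite ltr0n fact_gt0.
have b0 : 0 < expR (- a) * a ^+ k / k`!%:R * q ^+ k.
  by rewrite !mulr_gt0 ?invr_gt0 ?exprn_gt0 ?expR_gt0.
have := hp; rewrite -ler_ln ?posrE //; last exact: lt_le_trans hp.
rewrite lnM ?posrE ?divr_gt0 ?mulr_gt0 ?exprn_gt0 ?expR_gt0 //.
rewrite ln_div ?posrE ?mulr_gt0 ?exprn_gt0 ?expR_gt0 //.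
rewrite lnM ?posrE ?exprn_gt0 ?expR_gt0 // expRK !ln_pow //.
have := @lnfact_le R k; lra.
Qed.

Lemma xlnd_mono {R : realType} (k K d : R) : 0 < k -> k <= K -> 0 < d -> d <= K ->
  k * (ln k - ln d) <= K * (ln K - ln d).
Proof.
move=> k0 kK d0 dK.
have K0 : 0 < K by apply: lt_le_trans kK.
have hR : 0 <= K * (ln K - ln d).
  by apply: mulr_ge0; [exact: ltW | rewrite subr_ge0 ler_ln ?posrE].
have [kd|dk] := leP k d.
  apply: le_trans hR; apply: mulr_ge0_le0; [exact: ltW | rewrite subr_le0 ler_ln ?posrE //].
have e0 : (0 : R) < expR 1 by exact: expR_gt0.
have c0 : 0 < d / expR 1 by rewrite divr_gt0.
have lc : ln (d / expR 1) = ln d - 1 by rewrite ln_div ?posrE // expRK.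
have cd : d / expR 1 <= d.
  rewrite ler_pdivrMr // ler_peMr ?ltW //; have := expR_ge1Dx (1 : R); lra.
have := @xlnx_mono R (d / expR 1) k K c0 (le_trans cd (ltW dk)) kK.
rewrite lc; have -> : forall u : R, u - (ln d - 1) - 1 = u - ln d by move=> u; ring.
by have -> : ln K - (ln d - 1) - 1 = ln K - ln d by ring.
Qed.

Lemma upper_core {R : realType} (alpha T phi y1 z : R) (m : nat) (p : R) :
  0 < alpha -> 0 < T -> 0 < phi -> 0 < y1 ->
  alpha * T <= y1 * phi -> y1 * phi <= m%:R ->
  alpha * T + y1 * phi * (- (ln y1 - ln alpha - 1)) <= (y1 - z) * phi * (ln phi - ln T) ->
  0 < p -> p <= (alpha * T) ^+ m / m`!%:R * expR (alpha * T) ->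
  ln p <= - z * (phi * ln (phi / T)).
Proof.
move=> al0 T0 ph0 y0 aM Mm hC p0 hp.
have a0 : 0 < alpha * T by rewrite mulr_gt0.
have h1 := @ln_upper R _ _ m a0 p0 hp.
have h2 := @xlnx_mono R _ _ _ a0 aM Mm.
rewrite lnM ?posrE // in h2; rewrite lnM ?posrE // in h1 h2.
rewrite ln_div ?posrE //.
nra.
Qed.

Lemma lower_core {R : realType} (alpha T phi x e x1 q : R) (k : nat) (p : R) :
  0 < alpha -> 0 < T -> 0 < phi -> 0 < q -> q <= 1 -> 0 < x1 -> (0 < k)%N ->
  k%:R <= x1 * phi -> alpha * T <= x1 * phi ->
  alpha * T + x1 * phi * (ln x1 - ln alpha - ln q) <= (x + e - x1) * phi * (ln phi - ln T) ->
  expR (- (alpha * T)) * (alpha * T) ^+ k / k`!%:R * q ^+ k <= p ->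
  - (x + e) * (phi * ln (phi / T)) <= ln p.
Proof.
move=> al0 T0 ph0 q0 q1 x0 k0 kK aK hC hp.
have a0 : 0 < alpha * T by rewrite mulr_gt0.
have h1 := @ln_lower R _ _ _ k a0 q0 hp.
have d0 : 0 < alpha * T * q by rewrite mulr_gt0.
have dK : alpha * T * q <= x1 * phi.
  apply: le_trans aK; rewrite ler_piMr // ltW //.
have kp : (0 : R) < k%:R by rewrite ltr0n.
have h2 := @xlnd_mono R _ _ _ kp kK d0 dK.
rewrite !lnM ?posrE // in h2; rewrite lnM ?posrE // in h1.
rewrite ln_div ?posrE //.
nra.
Qed.


Lemma esup_le {R : realType} (f : R -> \bar R) (c : \bar R) :
  (\forall T \near +oo, (f T <= c)%E) -> (limf_esup f (pinfty_nbhs R) <= c)%E.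
Proof.
move=> hV; rewrite limf_esupE.
apply: le_trans (ereal_inf_lbound _) _; first by exists [set T | (f T <= c)%E].
by apply: ub_ereal_sup => _ [T hT <-].
Qed.

Lemma einf_ge {R : realType} (f : R -> \bar R) (c : \bar R) :
  (\forall T \near +oo, (c <= f T)%E) -> (c <= limf_einf f (pinfty_nbhs R))%E.
Proof.
move=> hV; rewrite limf_einfE.
apply: le_trans _ (ereal_sup_ubound _); last by exists [set T | (c <= f T)%E].
by apply: le_ereal_inf_tmp => _ [T hT <-].
Qed.

Lemma upper_glue {R : realType} (L r : \bar R) :
  (forall z : R, (z%:E < r)%E -> (L <= (- z)%:E)%E) -> (L <= - r)%E.
Proof.
case: r => [rho| |] h.
- apply/lee_addgt0Pr => e e0.
  have := h (rho - e); rewrite lte_fin => /(_ ltac:(lra)).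
  by rewrite -EFinD; congr (_ <= _)%E; congr (_%:E); ring.
- case: L h => [l| |] h //.
  + exfalso; have := h (- l + 1)%R (ltry _); rewrite lee_fin; lra.
  + by have := h 0%R (ltry _).
- by rewrite leey.
Qed.

Lemma lower_glue {R : realType} (L : \bar R) (x : R) :
  (forall e : R, 0 < e -> ((- (x + e))%:E <= L)%E) -> ((- x)%:E <= L)%E.
Proof.
move=> h; apply/lee_addgt0Pr => e e0.
case: L h => [l| |] h //; last by have := h e e0.
  have := h e e0; rewrite !lee_fin; lra.
by rewrite leey.
Qed.

Lemma NL_upper {R : realType} (psi : R -> R) (P : R -> \bar R) T (b c : R) :
  0 < psi T -> (0 <= P T)%E -> (P T <= b%:E)%E ->
  (forall p, 0 < p -> P T = p%:E -> ln p <= c * psi T) ->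
  (norm_log psi P T <= c%:E)%E.
Proof.
move=> ps0 P0 Pb h; rewrite /norm_log; case: eqP => [_|Pn0]; first exact: leNye.
have Pfin : P T \is a fin_num by rewrite ge0_fin_numE // (le_lt_trans Pb) ?ltry.
have pp : 0 < fine (P T).
  rewrite lt_neqAle fine_ge0 // andbT; apply/eqP => e; apply: Pn0.
  by rewrite -(fineK Pfin) -e.
rewrite lee_fin ler_pdivrMr //; apply: h => //; by rewrite fineK.
Qed.

Lemma NL_lower {R : realType} (psi : R -> R) (P : R -> \bar R) T (lb b c : R) :
  0 < psi T -> 0 < lb -> (lb%:E <= P T)%E -> (P T <= b%:E)%E ->
  (forall p, lb <= p -> P T = p%:E -> c * psi T <= ln p) ->
  (c%:E <= norm_log psi P T)%E.
Proof.
move=> ps0 lb0 Plb Pb h; rewrite /norm_log.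
have P0 : (0 <= P T)%E by apply: le_trans Plb; rewrite lee_fin ltW.
have Pfin : P T \is a fin_num by rewrite ge0_fin_numE // (le_lt_trans Pb) ?ltry.
case: eqP => [e|_].
  by move: Plb; rewrite e lee_fin => /(lt_le_trans lb0); rewrite ltxx.
rewrite lee_fin ler_pdivlMr //; apply: h; last by rewrite fineK.
by rewrite -lee_fin fineK.
Qed.


Lemma prob_ge0 {R : realType} (lam mu alpha : R) (phi : R -> R) T B :
  0 < lam -> 0 < mu -> 0 <= alpha * T -> (0 <= puc_prob lam mu alpha phi T B)%E.
Proof.
move=> l0 m0 a0; apply: nneseries_ge0 => n _ _.
by destruct (pselect _) => //; exact: xi_ge0.
Qed.

Lemma prob_upper0 {R : realType} (lam mu alpha : R) (phi : R -> R) T B :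
  0 < lam -> 0 < mu -> 0 <= alpha * T ->
  (puc_prob lam mu alpha phi T B <= (expR (alpha * T))%:E)%E.
Proof.
move=> l0 m0 a0; have := @prob_upper R lam mu alpha phi T B 0%N l0 m0 a0 (fun k _ => leq0n k).
by rewrite expr0 fact0 divr1 mul1r.
Qed.

Lemma rate_compact {R : realType} (c : R) : 0 <= c ->
  compact [set x | (rate_I2 x <= c%:E)%E].
Proof.
move=> c0.
have -> : [set x | (rate_I2 x <= c%:E)%E] = `[0, c]%classic.
  apply/seteqP; split => x /=; rewrite /rate_I2 in_itv /=.
    by case: ltP => // x0; rewrite lee_fin => ->.
  by move=> /andP[x0 xc]; rewrite ltNge x0 /= lee_fin.
exact: segment_compact.
Qed.

Lemma ev_big {R : realType} (phi : R -> R) (c : R) :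
  (fun T => phi T / T) @ +oo --> +oo ->
  \forall T \near +oo, c <= phi T / T.
Proof. by move=> h; move/cvgryPge : h; apply. Qed.

Lemma ev_facts {R : realType} {phi : R -> R} {c T : R} : 0 < c -> 1 < T -> c <= phi T / T ->
  [/\ 0 < T, c * T <= phi T, c <= phi T & ln c <= ln (phi T / T)].
Proof.
move=> c0 T1 h.
have T0 : 0 < T by lra.
have cT : c * T <= phi T by rewrite -ler_pdivlMr.
split => //; first by nra.
by rewrite ler_ln ?posrE //; apply: lt_le_trans h.
Qed.

Lemma upper_neg {R : realType} (lam mu alpha : R) (phi : R -> R) B z :
  0 < lam -> 0 < mu -> 0 < alpha -> (forall T, 0 < T -> 0 < phi T) ->
  (fun T => phi T / T) @ +oo --> +oo -> z < 0 ->
  \forall T \near +oo, (norm_log (fun T => (phi T * ln (phi T / T))%R)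
      (fun T => puc_prob lam mu alpha phi T B) T <= (- z)%:E)%E.
Proof.
move=> l0 m0 al0 php hphi z0.
have c0 : 0 < alpha / (- z) + expR 1 by rewrite addr_gt0 ?expR_gt0 // divr_gt0 // oppr_gt0.
near=> T.
have T1 : 1 < T by near: T; exact: nbhs_pinfty_gt (num_real 1).
have hc : alpha / (- z) + expR 1 <= phi T / T by near: T; exact: ev_big.
have [T0 cT cphi lnc] := ev_facts c0 T1 hc.
have ph0 := php T T0.
have a0 : 0 <= alpha * T by rewrite mulr_ge0 ?ltW.
have L1 : 1 <= ln (phi T / T).
  rewrite -[1](expRK (1 : R)) ler_ln ?posrE ?expR_gt0 ?divr_gt0 //.
  apply: le_trans hc; rewrite lerDr divr_ge0 ?ltW // oppr_gt0 //.
have aT : alpha * T <= - z * phi T.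
  have : alpha / (- z) * T <= phi T.
    apply: le_trans cT; have := @expR_ge0 R 1; nra.
  have zn : z != 0 by rewrite lt_eqF.
  have e : - z * (alpha / - z) = alpha by field.
  nra.
apply: (@NL_upper R (fun T2 : R => (phi T2 * ln (phi T2 / T2))%R) (fun T => puc_prob lam mu alpha phi T B) T (expR (alpha * T))).
- by rewrite mulr_gt0 //; apply: lt_le_trans L1.
- exact: prob_ge0.
- exact: prob_upper0.
move=> p p0 hp.
have := @prob_upper0 R lam mu alpha phi T B l0 m0 a0; rewrite hp lee_fin => pb.
have : ln p <= alpha * T by rewrite -[alpha * T]expRK ler_ln ?posrE ?expR_gt0.
have zp : 0 <= - z * phi T by rewrite mulr_ge0 ?ltW // oppr_gt0.
nra.
Unshelve. all: end_near.
Qed.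

Lemma upper_pos {R : realType} (lam mu alpha : R) (phi : R -> R) B z y :
  0 < lam -> 0 < mu -> 0 < alpha -> (forall T, 0 < T -> 0 < phi T) ->
  (fun T => phi T / T) @ +oo --> +oo -> 0 <= z -> z < y ->
  (forall x, B x -> 0 <= x -> y < x) ->
  \forall T \near +oo, (norm_log (fun T => (phi T * ln (phi T / T))%R)
      (fun T => puc_prob lam mu alpha phi T B) T <= (- z)%:E)%E.
Proof.
move=> l0 m0 al0 php hphi z0 zy hB.
set y1 := (z + y) / 2.
have y10 : 0 < y1 by rewrite /y1; lra.
have zy1 : z < y1 by rewrite /y1; lra.
have y1y : y1 < y by rewrite /y1; lra.
set C := - (ln y1 - ln alpha - 1).
set K := (alpha + y1 * `|C|) / (y1 - z).
set c := 1 + alpha / y1 + (y - y1)^-1 + expR K.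
have h1 : 0 < alpha / y1 by rewrite divr_gt0.
have h2 : 0 < (y - y1)^-1 by rewrite invr_gt0 subr_gt0.
have h3 := expR_gt0 K.
have c0 : 0 < c by rewrite /c; lra.
near=> T.
have T1 : 1 < T by near: T; exact: nbhs_pinfty_gt (num_real 1).
have hc : c <= phi T / T by near: T; exact: ev_big.
have [T0 cT cphi lnc] := ev_facts c0 T1 hc.
have ph0 := php T T0.
have a0 : 0 <= alpha * T by rewrite mulr_ge0 ?ltW.
have hK : K <= ln (phi T / T).
  apply: le_trans lnc; rewrite -[X in X <= _]expRK ler_ln ?posrE ?expR_gt0 //.
  rewrite /c; lra.
have c1 : 1 <= c by rewrite /c; lra.
have Tphi : T <= phi T by nra.
have yphi : 1 <= (y - y1) * phi T.
  have e : (y - y1) * (y - y1)^-1 = 1 by field; rewrite gt_eqF // subr_gt0.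
  have : (y - y1)^-1 <= phi T by apply: le_trans cphi; rewrite /c; lra.
  nra.
have aM : alpha * T <= y1 * phi T.
  have e : y1 * (alpha / y1) = alpha by field; rewrite gt_eqF.
  have : alpha / y1 * T <= phi T.
    by apply: le_trans cT; apply: ler_wpM2r; [exact: ltW | rewrite /c; lra].
  nra.
have yp0 : 0 <= y * phi T by rewrite mulr_ge0 // ltW //; lra.
set m := Num.truncn (y * phi T).
have /andP[mle mlt] := Num.Theory.truncn_itv yp0.
rewrite -/m -natr1 in mle mlt.
have Mm : y1 * phi T <= m%:R by nra.
have hBm : forall k : nat, B (k%:R / phi T) -> (m <= k)%N.
  move=> k Bk; have yk := hB _ Bk (divr_ge0 (ler0n _ _) (ltW ph0)).
  have : y * phi T < k%:R by rewrite -ltr_pdivlMr.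
  move=> h; rewrite -ltnS -(ltr_nat R); apply: le_lt_trans mle _.
  by apply: lt_le_trans h _; rewrite -natr1 lerDl.
have K0 : 0 < K.
  by rewrite /K; apply: divr_gt0; [have := normr_ge0 C; nra | rewrite subr_gt0].
have L0 : 0 < ln (phi T / T) by apply: lt_le_trans hK.
have hC : alpha * T + y1 * phi T * C <= (y1 - z) * phi T * (ln (phi T) - ln T).
  rewrite -ln_div ?posrE //.
  have eK : K * (y1 - z) = alpha + y1 * `|C| by rewrite /K; field; rewrite gt_eqF // subr_gt0.
  have hC1 : C <= `|C| by exact: ler_norm.
  have : alpha + y1 * `|C| <= (y1 - z) * ln (phi T / T) by rewrite -eK mulrC ler_wpM2l // subr_ge0 ltW.
  nra.
apply: (@NL_upper R (fun T2 : R => (phi T2 * ln (phi T2 / T2))%R) (fun T => puc_prob lam mu alpha phi T B) T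
   ((alpha * T) ^+ m / m`!%:R * expR (alpha * T))).
- by rewrite mulr_gt0.
- exact: prob_ge0.
- exact: prob_upper.
move=> p p0 hp.
have := @prob_upper R lam mu alpha phi T B m l0 m0 a0 hBm; rewrite hp lee_fin => pb.
exact: (@upper_core R alpha T (phi T) y1 z m p al0 T0 ph0 y10 aM Mm hC p0 pb).
Unshelve. all: end_near.
Qed.


Lemma upper_part {R : realType} (lam mu alpha : R) (phi : R -> R) B :
  0 < lam -> 0 < mu -> 0 < alpha -> (forall T, 0 < T -> 0 < phi T) ->
  (fun T => phi T / T) @ +oo --> +oo ->
  (limf_esup (norm_log (fun T => (phi T * ln (phi T / T))%R)
      (fun T => puc_prob lam mu alpha phi T B)) (pinfty_nbhs R)
    <= - rate_inf rate_I2 (closure B))%E.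
Proof.
move=> l0 m0 al0 php hphi.
apply: upper_glue => z zr; apply: esup_le.
have [z0|z0] := ltP z 0; first exact: upper_neg.
have [y zy yr] : exists2 y, z < y & (y%:E < rate_inf rate_I2 (closure B))%E.
  move: zr; case: (rate_inf rate_I2 (closure B)) => [rho| |] //.
  - by rewrite lte_fin => zr; exists ((z + rho) / 2); rewrite ?lte_fin; lra.
  - by move=> _; exists (z + 1); rewrite ?ltry //; lra.
apply: (@upper_pos R lam mu alpha phi B z y) => // x Bx x0.
have : (rate_inf rate_I2 (closure B) <= rate_I2 x)%E.
  by apply: ereal_inf_lbound; exists x => //; exact: subset_closure.
rewrite /rate_I2 ltNge x0 /= => h.
by have := lt_le_trans yr h; rewrite lte_fin.
Qed.

Lemma lower_pos {R : realType} (lam mu alpha : R) (phi : R -> R) (B : set R) (x e : R) :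
  0 < lam -> 0 < mu -> 0 < alpha -> (forall T, 0 < T -> 0 < phi T) ->
  (fun T => phi T / T) @ +oo --> +oo -> 0 <= x -> interior B x -> 0 < e ->
  \forall T \near +oo, ((- (x + e))%:E <= norm_log (fun T => (phi T * ln (phi T / T))%R)
      (fun T => puc_prob lam mu alpha phi T B) T)%E.
Proof.
move=> l0 m0 al0 php hphi x0 xB e0.
case/nbhs_ballP: xB => d /= d0 hd.
set x1 := x + e / 2.
have x10 : 0 < x1 by rewrite /x1; lra.
set q := lam / (lam + mu).
have lm : 0 < lam + mu by rewrite addr_gt0.
have q0 : 0 < q by rewrite divr_gt0.
have q1 : q <= 1 by rewrite ler_pdivrMr // mul1r lerDl ltW.
set D := ln x1 - ln alpha - ln q.
set K := (alpha + x1 * `|D|) / (e / 2).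
set c := 1 + (e / 2)^-1 + d^-1 + alpha / x1 + expR K.
have h1 : 0 < alpha / x1 by rewrite divr_gt0.
have h2 : 0 < (e / 2)^-1 by rewrite invr_gt0; lra.
have h2' : 0 < d^-1 by rewrite invr_gt0.
have h3 := expR_gt0 K.
have c0 : 0 < c by rewrite /c; lra.
near=> T.
have T1 : 1 < T by near: T; exact: nbhs_pinfty_gt (num_real 1).
have hc : c <= phi T / T by near: T; exact: ev_big.
have [T0 cT cphi lnc] := ev_facts c0 T1 hc.
have ph0 := php T T0.
have a0 : 0 <= alpha * T by rewrite mulr_ge0 ?ltW.
have K0 : 0 < K.
  by rewrite /K; apply: divr_gt0; [have := normr_ge0 D; nra | lra].
have hK : K <= ln (phi T / T).
  apply: le_trans lnc; rewrite -[X in X <= _]expRK ler_ln ?posrE ?expR_gt0 //.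
  rewrite /c; lra.
have L0 : 0 < ln (phi T / T) by apply: lt_le_trans hK.
have c1 : 1 <= c by rewrite /c; lra.
have Tphi : T <= phi T by nra.
have ephi : 1 <= e / 2 * phi T.
  have ee : e / 2 * (e / 2)^-1 = 1 by field; rewrite gt_eqF.
  have : (e / 2)^-1 <= phi T by apply: le_trans cphi; rewrite /c; lra.
  have : 0 < e / 2 by lra.
  nra.
have dphi : 1 < d * phi T.
  have dd : d * d^-1 = 1 by field; rewrite gt_eqF.
  have : d^-1 < phi T by apply: lt_le_trans cphi; rewrite /c; lra.
  nra.
have aK : alpha * T <= x1 * phi T.
  have ee : x1 * (alpha / x1) = alpha by field; rewrite gt_eqF.
  have : alpha / x1 * T <= phi T.
    by apply: le_trans cT; apply: ler_wpM2r; [exact: ltW | rewrite /c; lra].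
  nra.
have xp0 : 0 <= x * phi T by rewrite mulr_ge0 // ltW.
set k := (Num.truncn (x * phi T)).+1.
have /andP[kle klt] := Num.Theory.truncn_itv xp0.
rewrite -/k in klt.
have kle' : k%:R <= x * phi T + 1 by rewrite /k -natr1 lerD2r.
have kK : k%:R <= x1 * phi T by rewrite /x1; nra.
have Bk : B (k%:R / phi T).
  apply: hd; rewrite -ball_normE /ball_ /=.
  have hk1 : x < k%:R / phi T by rewrite ltr_pdivlMr.
  have hk2 : k%:R / phi T <= x + 1 / phi T.
    have ee : (x + 1 / phi T) * phi T = x * phi T + 1 by field; rewrite gt_eqF.
    by rewrite ler_pdivrMr // ee.
  have hk3 : 1 / phi T < d by rewrite ltr_pdivrMr.
  rewrite ltr_norml; apply/andP; split; lra.
have hC : alpha * T + x1 * phi T * D <= (x + e - x1) * phi T * (ln (phi T) - ln T).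
  rewrite -ln_div ?posrE //.
  have eK : K * (e / 2) = alpha + x1 * `|D| by rewrite /K; field; rewrite gt_eqF //; lra.
  have hD1 : D <= `|D| by exact: ler_norm.
  have : alpha + x1 * `|D| <= (e / 2) * ln (phi T / T).
    by rewrite -eK mulrC ler_wpM2l //; lra.
  have -> : x + e - x1 = e / 2 by rewrite /x1; field.
  nra.
apply: (@NL_lower R (fun T2 : R => (phi T2 * ln (phi T2 / T2))%R) (fun T => puc_prob lam mu alpha phi T B) T
   (Defs.poisson_pmf alpha T k * q ^+ k) (expR (alpha * T))).
- by rewrite mulr_gt0.
- rewrite mulr_gt0 ?exprn_gt0 // /Defs.poisson_pmf !mulr_gt0 ?expR_gt0 ?exprn_gt0 ?invr_gt0 ?ltr0n ?fact_gt0 //.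
  by rewrite mulr_gt0.
- exact: prob_lower.
- exact: prob_upper0.
move=> p hp _.
exact: (@lower_core R alpha T (phi T) x e x1 q k p al0 T0 ph0 q0 q1 x10 (ltn0Sn _) kK aK hC hp).
Unshelve. all: end_near.
Qed.

Lemma lower_part {R : realType} (lam mu alpha : R) (phi : R -> R) B :
  0 < lam -> 0 < mu -> 0 < alpha -> (forall T, 0 < T -> 0 < phi T) ->
  (fun T => phi T / T) @ +oo --> +oo ->
  (- rate_inf rate_I2 (interior B) <=
    limf_einf (norm_log (fun T => (phi T * ln (phi T / T))%R)
      (fun T => puc_prob lam mu alpha phi T B)) (pinfty_nbhs R))%E.
Proof.
move=> l0 m0 al0 php hphi.
rewrite /rate_inf /ereal_inf oppeK.
apply: ub_ereal_sup => _ [_ [x xB <-] <-].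
rewrite /rate_I2; case: ltP => x0 /=; first exact: leNye.
apply: lower_glue => e e0; apply: einf_ge; exact: lower_pos.
Qed.

Theorem theorem2p4 (R : realType) (lam mu alpha : R) (phi : R -> R) :
  0 < lam -> 0 < mu -> 0 < alpha ->
  (forall T, 0 < T -> 0 < phi T) ->
  (fun T => phi T / T) @ +oo --> +oo ->
  LDP (fun T B => puc_prob lam mu alpha phi T B) rate_I2
      (fun T => phi T * ln (phi T / T)).
Proof.
move=> l0 m0 al0 php hphi; split; first exact: rate_compact.
split => B _; [exact: upper_part | exact: lower_part].
Qed.
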